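(* Let $(X,M)$ be an intrinsic Möbius space and let $d$ be a (possibly extended) quasi-metric on $X$ that induces $M$. Let $d'$ be either a rescaling $d'=\lambda d$ ($\lambda>0$) of $d$ or the involution $d'=d_o$ of $d$ at a point $o\in X$ which is not the point at infinity of $d$. Then $\dim_{Haus}(X,d)=\dim_{Haus}(X,d')$. In particular, setting $\dim_{Haus}(X,M):=\dim_{Haus}(X,d)$ for any quasi-metric $d$ inducing $M$ gives a well-defined quantity, and if $f:(X,M)\to(X',M')$ is a Möbius equivalence between intrinsic Möbius spaces, then $\dim_{Haus}(X,M)=\dim_{Haus}(X',M')$.
   Context: Let $X$ be a set with at least three points. A semi-metric is a symmetric map $d:X\times X\to[0,\infty)$ with $d(x,y)=0\iff x=y$. An extended semi-metric is a map $d:X\times X\to[0,\infty]$, symmetric with $d(x,y)=0\iff x=y$, for which there is exactly one point $\infty\in X$ (the point at infinity) with $d(x,\infty)=\infty$ for $x\neq\infty$ and $d(x,y)<\infty$ for $x,y\neq\infty$. For $K\ge1$, a (possibly extended) $K$-quasi-metric is a (possibly extended) semi-metric with $d(x,y)\le K\max(d(x,z),d(z,y))$ for all $x,y,z$; a quasi-metric is a $K$-quasi-metric for some $K$. Admissible quadruples $\mathcal A_4$: quadruples in $X^4$ in which no point appears more than twice; non-degenerate means all entries distinct. Let $\overline\Delta=\{(a:b:c)\in\mathbb RP^2: a,b,c>0\}\cup\{(1:1:0),(1:0:1),(0:1:1)\}$. The cross-ratio triple of $d$ is $crt_d(wxyz)=(d(w,x)d(y,z):d(w,y)d(z,x):d(w,z)d(x,y))$,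 where infinite distances cancel: $crt_d(\infty xyz)=(d(y,z):d(z,x):d(x,y))$, $crt_d(\infty\infty yz)=(0:1:1)$, and analogously for permutations. Let $L_4=\{(x,y,z)\in\mathbb R^3:x+y+z=0\}$, $\overline{L_4}=L_4\cup\{(0,\infty,-\infty),(-\infty,0,\infty),(\infty,-\infty,0)\}$, and $\overline\Phi:\overline\Delta\to\overline{L_4}$, $(a:b:c)\mapsto(\ln(b/c),\ln(c/a),\ln(a/b))$, extended by $(1:1:0)\mapsto(\infty,-\infty,0)$, $(1:0:1)\mapsto(-\infty,0,\infty)$, $(0:1:1)\mapsto(0,\infty,-\infty)$. Let $\varphi:\mathcal S_4\to\mathcal S_3$ be the homomorphism given by the induced permutation of the triple $((12)(34),(13)(42),(14)(23))$; $\mathcal S_3$ acts on $\overline{L_4}$ by permuting coordinates. A generalized Möbius structure is a map $M:\mathcal A_4\to\overline{L_4}$ such that: (1) $M(\pi P)=\mathrm{sgn}(\pi)\varphi(\pi)M(P)$ for all $P\in\mathcal A_4$, $\pi\in\mathcal S_4$; (2) $M(P)\in L_4$ iff $P$ is non-degenerate; (3) $M(xxyz)=(0,\infty,-\infty)$; (4) for every admissible 5-tuple $(x,y,\omega,\alpha,\beta)$ with $(\omega,\alpha,\beta)$ non-degenerate, $\alpha\ne x\ne\beta$, $\alpha\ne y\ne\beta$, there is $\lambda\in\mathbb R\cup\{\pm\infty\}$ with $M(\alpha x\omega\beta)+M(\alpha\omega y\beta)-M(\alpha xy\beta)=(\lambda,-\lambda,0)$; moreover the first component of the left side is well defined when $x\neq\beta$,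 $y\ne\alpha$, and the second when $x\ne\alpha$, $y\ne\beta$. Write $crt=\overline\Phi^{-1}\circ M$. A semi-metric $d$ induces $M$ if $crt=crt_d$. $M$ is intrinsic (and $(X,M)$ an intrinsic Möbius space) if moreover the closure of the image of $crt$ in $\mathbb RP^2$ contains none of $(1:0:0),(0:1:0),(0:0:1)$. A Möbius equivalence $f:(X,M)\to(X',M')$ is a bijection with $M'(f(w)f(x)f(y)f(z))=M(wxyz)$ for all admissible quadruples. Involution: for a (possibly extended) quasi-metric $d$ and $o\in X$ other than the point at infinity, $d_o(x,x)=0$, $d_o(x,y)=\frac{d(x,y)}{d(x,o)d(o,y)}$ for distinct $x,y\ne\infty$, $d_o(\infty,y)=1/d(o,y)$ and $d_o(x,\infty)=1/d(x,o)$ for the respective distinct points, with the convention $\lambda/0=\infty$ for $\lambda>0$. Hausdorff dimension of a (possibly extended) quasi-metric space $(X,d)$: $B_r(x)=\{y:d(x,y)\le r\}$; a $\delta$-cover of a set is a cover by closed balls $B_{r_i}(x_i)$ with $r_i\le\delta$. For $A\subseteq X$, $s\ge0$: $\mu^s_{\delta,d}(A)=\inf\{\sum_i r_i^s:\{B_{r_i}(x_i)\}\text{ a }\delta\text{-cover of }A\setminus\{\infty\}\}$, $\mu^s_d(A)=\lim_{\delta\to0}\mu^s_{\delta,d}(A)$, and $\dim_{Haus}(X,d)=\inf\{s\in\mathbb R:\mu^s_d(X)=0\}$. *)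

(* Defs.v *)
From HB Require Import structures.
From mathcomp Require Import all_boot all_order all_algebra all_fingroup.
From mathcomp Require Import all_classical all_reals all_analysis.
Set Implicit Arguments. Unset Strict Implicit. Unset Printing Implicit Defensive.
Import Order.TTheory GRing.Theory Num.Theory.
Import numFieldTopology.Exports.
Local Open Scope classical_set_scope.
Local Open Scope ring_scope.

Section Defs.
Variable R : realType.

Definition at_least_three_points (X : Type) : Prop :=
  exists x y z : X, x <> y /\ y <> z /\ x <> z.

Definition admissible {X : Type} {n : nat} (P : 'I_n -> X) : Prop :=
  forall i j k : 'I_n, i != j -> j != k -> i != k -> ~ (P i = P j /\ P j = P k).

Definition nondegenerate {X : Type} {n : nat} (P : 'I_n -> X) : Prop :=
  injective P.

Definition q4 {X : Type} (a b c e : X) : 'I_4 -> X :=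
  fun i => match nat_of_ord i with 0 => a | 1 => b | 2 => c | _ => e end.

Definition q5 {X : Type} (a b c e f : X) : 'I_5 -> X :=
  fun i => match nat_of_ord i with 0 => a | 1 => b | 2 => c | 3 => e | _ => f end.

Definition is_infpt {X : Type} (d : X -> X -> \bar R) (p : X) : Prop :=
  forall x, x <> p -> d x p = +oo%E.

Definition semimetric {X : Type} (d : X -> X -> \bar R) : Prop :=
  (forall x y, d x y = d y x) /\ (forall x y, d x y = 0%E <-> x = y) /\
  (forall x y, (0 <= d x y)%E) /\ (forall x y, (d x y < +oo)%E).

Definition ext_semimetric {X : Type} (d : X -> X -> \bar R) : Prop :=
  (forall x y, d x y = d y x) /\ (forall x y, d x y = 0%E <-> x = y) /\
  (forall x y, (0 <= d x y)%E) /\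
  exists inf : X,
    (forall x, x <> inf -> d x inf = +oo%E) /\
    (forall x y, x <> inf -> y <> inf -> (d x y < +oo)%E) /\
    (forall p, (forall x, x <> p -> d x p = +oo%E) -> p = inf).

Definition K_quasi_ineq {X : Type} (K : R) (d : X -> X -> \bar R) : Prop :=
  forall x y z, (d x y <= K%:E * Order.max (d x z) (d z y))%E.

Definition quasi_metric {X : Type} (d : X -> X -> \bar R) : Prop :=
  (semimetric d \/ ext_semimetric d) /\ exists K : R, 1 <= K /\ K_quasi_ineq K d.

Definition rescale {X : Type} (lam : R) (d : X -> X -> \bar R) : X -> X -> \bar R :=
  fun x y => (lam%:E * d x y)%E.

(* e1 / e2 for positive real e1, finite e2 >= 0, with lambda/0 = +oo *)
Definition ediv (e1 e2 : \bar R) : \bar R :=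
  if e2 == 0%E then +oo%E else (fine e1 / fine e2)%:E.

Definition involution {X : Type} (d : X -> X -> \bar R) (o : X) : X -> X -> \bar R :=
  fun x y =>
    if `[< x = y >] then 0%E
    else if `[< is_infpt d x >] then ediv 1%E (d o y)
    else if `[< is_infpt d y >] then ediv 1%E (d x o)
    else ediv (d x y) (d x o * d o y)%E.

Definition delta_cover {X : Type} (d : X -> X -> \bar R) (A : set X) (delta : R)
    (c : nat -> X) (r : nat -> R) : Prop :=
  (forall i, 0 <= r i /\ r i <= delta) /\
  (forall y, A y -> ~ is_infpt d y -> exists i, (d (c i) y <= (r i)%:E)%E).

Definition hmu_delta {X : Type} (d : X -> X -> \bar R) (s delta : R) (A : set X) : \bar R :=
  ereal_inf [set e | exists c r, delta_cover d A delta c r /\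
                       e = (\sum_(0 <= i <oo) ((r i) `^ s)%:E)%E].

(* limit delta -> 0 of the nonincreasing function delta |-> hmu_delta *)
Definition hmu {X : Type} (d : X -> X -> \bar R) (s : R) (A : set X) : \bar R :=
  ereal_sup [set hmu_delta d s delta A | delta in [set delta : R | 0 < delta]].

Definition hausdorff_dim {X : Type} (d : X -> X -> \bar R) : \bar R :=
  ereal_inf [set s%:E | s in [set s : R | 0 <= s /\ hmu d s setT = 0%E]].

Definition triple := (\bar R * \bar R * \bar R)%type.

Definition coord (v : triple) (j : 'I_3) : \bar R :=
  match nat_of_ord j with 0 => v.1.1 | 1 => v.1.2 | _ => v.2 end.

Definition inL4 (v : triple) : Prop :=
  exists a b c : R, v = (a%:E, b%:E, c%:E) /\ a + b + c = 0.

Definition inL4bar (v : triple) : Prop :=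
  inL4 v \/ v = (0%E, +oo%E, -oo%E) \/ v = (-oo%E, 0%E, +oo%E) \/ v = (+oo%E, -oo%E, 0%E).

(* representatives (a,b,c) of points (a:b:c) of Delta-bar *)
Definition inDeltabar (a b c : R) : Prop :=
  (0 < a /\ 0 < b /\ 0 < c) \/ (a = 0 /\ 0 < b /\ b = c) \/
  (b = 0 /\ 0 < a /\ a = c) \/ (c = 0 /\ 0 < a /\ a = b).

Definition Phibar (a b c : R) : triple :=
  if a == 0 then (0%E, +oo%E, -oo%E)
  else if b == 0 then (-oo%E, 0%E, +oo%E)
  else if c == 0 then (+oo%E, -oo%E, 0%E)
  else ((ln (b / c))%:E, (ln (c / a))%:E, (ln (a / b))%:E).

(* distance with infinite distances "cancelled" (replaced by 1) *)
Definition fd {X : Type} (d : X -> X -> \bar R) (x y : X) : R :=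
  if `[< x <> y /\ (is_infpt d x \/ is_infpt d y) >] then 1 else fine (d x y).

Definition crt_d {X : Type} (d : X -> X -> \bar R) (P : 'I_4 -> X) : R * R * R :=
  let w := P (inord 0) in let x := P (inord 1) in
  let y := P (inord 2) in let z := P (inord 3) in
  (fd d w x * fd d y z, fd d w y * fd d z x, fd d w z * fd d x y).

Definition mstruct (X : Type) := X -> X -> X -> X -> triple.

Definition appM {X : Type} (M : mstruct X) (P : 'I_4 -> X) : triple :=
  M (P (inord 0)) (P (inord 1)) (P (inord 2)) (P (inord 3)).

Definition o4 (n : nat) : 'I_4 := inord n.

(* the Klein elements (12)(34), (13)(42), (14)(23) of S_4 (0-indexed points) *)
Definition klein (j : 'I_3) : 'S_4 :=
  match nat_of_ord j with
  | 0 => (tperm (o4 0) (o4 1) * tperm (o4 2) (o4 3))%g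
  | 1 => (tperm (o4 0) (o4 2) * tperm (o4 3) (o4 1))%g
  | _ => (tperm (o4 0) (o4 3) * tperm (o4 1) (o4 2))%g
  end.

Definition sgn_act (pi : 'S_4) (e : \bar R) : \bar R := if odd_perm pi then (- e)%E else e.

(* well-definedness of a + b - c (no +oo and -oo simultaneously) *)
Definition wd_sum (a b c : \bar R) : Prop :=
  ~ ((a = +oo%E \/ b = +oo%E \/ c = -oo%E) /\ (a = -oo%E \/ b = -oo%E \/ c = +oo%E)).

Definition gen_mobius {X : Type} (M : mstruct X) : Prop :=
  (forall P : 'I_4 -> X, admissible P -> inL4bar (appM M P)) /\
  (* (1) M(pi P) = sgn(pi) phi(pi) M(P), where (pi P)_i = P_(pi^-1 i), phi(pi) is
     the permutation j |-> j' with pi k_j pi^-1 = k_j', and S_3 permutes coordinates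
     via (sigma v)_(sigma j) = v_j *)
  (forall (P : 'I_4 -> X) (pi : 'S_4) (j j' : 'I_3), admissible P ->
     (klein j ^ pi)%g = klein j' ->
     coord (appM M (fun i => P ((pi^-1)%g i))) j' = sgn_act pi (coord (appM M P) j)) /\
  (forall P : 'I_4 -> X, admissible P -> (inL4 (appM M P) <-> nondegenerate P)) /\
  (forall x y z : X, admissible (q4 x x y z) -> M x x y z = (0%E, +oo%E, -oo%E)) /\
  (forall x y w a b : X, admissible (q5 x y w a b) -> w <> a -> a <> b -> w <> b ->
     a <> x -> x <> b -> a <> y -> y <> b ->
     let S (j : 'I_3) := (coord (M a x w b) j + coord (M a w y b) j - coord (M a x y b) j)%E in
     (exists lam : \bar R, S (inord 0) = lam /\ S (inord 1) = (- lam)%E /\ S (inord 2) = 0%E) /\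
     (x <> b -> y <> a ->
        wd_sum (coord (M a x w b) (inord 0)) (coord (M a w y b) (inord 0)) (coord (M a x y b) (inord 0))) /\
     (x <> a -> y <> b ->
        wd_sum (coord (M a x w b) (inord 1)) (coord (M a w y b) (inord 1)) (coord (M a x y b) (inord 1)))).

(* d induces M : crt = crt_d, i.e. M = Phibar o crt_d on admissible quadruples *)
Definition induces {X : Type} (d : X -> X -> \bar R) (M : mstruct X) : Prop :=
  forall P : 'I_4 -> X, admissible P ->
    appM M P = Phibar (crt_d d P).1.1 (crt_d d P).1.2 (crt_d d P).2.

(* image of crt = Phibar^-1 o M, seen in the closed simplex of R^3 (homeomorphic
   to the nonnegative part of RP^2) *)
Definition crt_image {X : Type} (M : mstruct X) : set (R * R * R) :=
  [set p | exists (P : 'I_4 -> X) (a b c : R), admissible P /\ inDeltabar a b c /\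
             Phibar a b c = appM M P /\ p = (a / (a + b + c), b / (a + b + c), c / (a + b + c))].

Definition intrinsic {X : Type} (M : mstruct X) : Prop :=
  ~ closure (crt_image M) (1, 0, 0) /\ ~ closure (crt_image M) (0, 1, 0) /\
  ~ closure (crt_image M) (0, 0, 1).

Definition intrinsic_mobius_space {X : Type} (M : mstruct X) : Prop :=
  at_least_three_points X /\ gen_mobius M /\ intrinsic M.

Definition mobius_equivalence {X X' : Type} (M : mstruct X) (M' : mstruct X') (f : X -> X') : Prop :=
  bijective f /\ forall P : 'I_4 -> X, admissible P -> appM M' (f \o P) = appM M P.

End Defs.

(* Main.v *)
Require Import Defs.
From HB Require Import structures.
From mathcomp Require Import all_boot all_order all_algebra all_fingroup.
From mathcomp Require Import all_classical all_reals all_analysis.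
From mathcomp Require Import lra ring.
Set Implicit Arguments. Unset Strict Implicit. Unset Printing Implicit Defensive.
Import Order.TTheory GRing.Theory Num.Theory.
Local Open Scope classical_set_scope.
Local Open Scope ring_scope.

Section S.
Variable R : realType.
Local Open Scope ereal_scope.

Lemma sum_pair (u : nat -> nat -> \bar R) : (forall n i, 0 <= u n i) ->
  exists f : nat -> nat * nat, (forall p, exists k, f k = p) /\
    \sum_(0 <= k <oo) u (f k).1 (f k).2 = \sum_(0 <= n <oo) \sum_(0 <= i <oo) u n i.
Proof.
move=> u0.
have /card_esym/ppcard_eqP[f] := card_nat2.
exists f; split.
  by move=> p; exists (f^-1%FUN p); rewrite invK ?inE.
have muG_ge0 x : 0 <= (uncurry u) x by case: x => a b; exact: u0.
transitivity (\sum_(0 <= k <oo) uncurry u (f k)).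
  by apply: eq_eseriesr => k _; case: (f k).
transitivity (\esum_(i in setT) (uncurry u) i).
  rewrite -(esum_pred_image (uncurry u) _ xpredT) ?[fun=> _]set_true//.
    by rewrite image_eq.
  idtac.
pose J : nat -> set (nat * nat) := fun i => [set (i, j) | j in setT].
  rewrite (_ : setT = \bigcup_k J k); last first.
    by rewrite predeqE => -[a b]; split => // _; exists a => //; exists b.
  rewrite esum_bigcupT /=; last 2 first.
    - apply/trivIsetP => i j _ _ ij.
      rewrite predeqE => -[n m] /=; split => //= -[] [_] _ [<-{n} _].
      by move=> [m' _] [] /esym/eqP; rewrite (negbTE ij).
    - by move=> /= [n m]; apply: u0.
  rewrite -(image_id [set: nat]) -fun_true esum_pred_image//; last first.
    by move=> n _; exact: esum_ge0.
  apply: eq_eseriesr => /= j _.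
  rewrite -(esum_pred_image (uncurry u) (pair j) predT)//=; last first.
    by move=> ? ? _ _; exact: (@can_inj _ _ _ snd).
  by congr esum; rewrite predeqE => -[a b]; split; move=> [i _ <-]; exists i.
Qed.

Definition small_cover {X : Type} (d : X -> X -> \bar R) (s δ ε : R) :=
  exists c r, delta_cover d setT δ c r /\ \sum_(0 <= i <oo) ((r i) `^ s)%:E <= ε%:E.

Lemma hmu_delta_ge0 {X : Type} (d : X -> X -> \bar R) s δ A : 0 <= hmu_delta d s δ A.
Proof.
apply: le_ereal_inf_tmp => _ [c [r [_ ->]]].
by apply: nneseries_ge0 => n _ _; rewrite lee_fin powR_ge0.
Qed.

Lemma hmu0P {X : Type} (d : X -> X -> \bar R) (s : R) :
  hmu d s setT = 0 <-> (forall δ ε : R, (0 < δ)%R -> (0 < ε)%R -> small_cover d s δ ε).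
Proof.
split.
- move=> h0 δ ε δ0 ε0.
  have : hmu_delta d s δ setT < ε%:E.
    apply: (le_lt_trans _ (_ : 0 < ε%:E)); last by rewrite lte_fin.
    by rewrite -h0; apply: ereal_sup_ubound; exists δ.
  move/ereal_inf_lt => [_ [c [r [cov ->]]] lt].
  by exists c, r; split => //; exact: ltW.
- move=> h; apply/eqP; rewrite eq_le; apply/andP; split.
    apply: ge_ereal_sup => _ [δ /= δ0 <-].
    apply/lee_addgt0Pr => ε ε0; rewrite add0e.
    have [c [r [cov le]]] := h δ ε δ0 ε0.
    by apply: (le_trans _ le); apply: ereal_inf_lbound; exists c, r.
  apply: (le_trans (hmu_delta_ge0 d s 1 setT)).
  by apply: ereal_sup_ubound; exists 1%R => //=.
Qed.


Lemma transfer {X : Type} (d1 d2 : X -> X -> \bar R) (s : R) (A : nat -> set X)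
  (C rho : nat -> R) (e : nat -> X) :
  (0 < s)%R ->
  (forall x, d2 x x = 0) ->
  (forall N, 0 < C N)%R -> (forall N, 0 < rho N)%R ->
  (forall x, ~ is_infpt d2 x -> (exists N, A N x) \/ (exists j, x = e j)) ->
  (forall N x, A N x -> ~ is_infpt d1 x) ->
  (forall N c y z (r : R), A N y -> A N z -> (0 <= r)%R -> (r <= rho N)%R ->
      d1 c y <= r%:E -> d1 c z <= r%:E -> d2 y z <= (C N * r)%:E) ->
  hmu d1 s setT = 0 -> hmu d2 s setT = 0.
Proof.
move=> s0 d2xx C0 rho0 Hcov HA HH; rewrite !hmu0P => h δ ε δ0 ε0.
pose dl N := Order.min (δ / C N)%R (rho N).
have dl0 N : (0 < dl N)%R by rewrite lt_min divr_gt0 ?rho0 ?C0.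
pose el N := (ε / (2 ^ N.+2)%:R / (C N `^ s))%R.
have el0 N : (0 < el N)%R by rewrite !divr_gt0 ?powR_gt0.
have : forall N, exists cr : (nat -> X) * (nat -> R),
    delta_cover d1 setT (dl N) cr.1 cr.2 /\
    \sum_(0 <= i <oo) (((cr.2 i) `^ s)%:E) <= (el N)%:E.
  by move=> N; have [c [r H]] := h (dl N) (el N) (dl0 N) (el0 N); exists (c, r).
move=> /choice [G PG].
pose c N := (G N).1. pose r N := (G N).2.
have : forall p : nat * nat, exists y, (exists y', A p.1 y' /\ d1 (c p.1 p.2) y' <= (r p.1 p.2)%:E) ->
   A p.1 y /\ d1 (c p.1 p.2) y <= (r p.1 p.2)%:E.
  move=> p; have [[y' Hy']|nE] := pselect (exists y', A p.1 y' /\ d1 (c p.1 p.2) y' <= (r p.1 p.2)%:E).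
    by exists y'.
  by exists (c p.1 p.2) => /nE.
move=> /choice [Y PY].
pose cc n i := match n with 0 => e i | N.+1 => Y (N, i) end.
pose rr n i := match n with 0 => 0%R | N.+1 => (C N * r N i)%R end.
have u0 n i : 0 <= ((rr n i) `^ s)%:E by rewrite lee_fin powR_ge0.
have [f [fsurj fsum]] := sum_pair u0.
exists (fun k => cc (f k).1 (f k).2), (fun k => rr (f k).1 (f k).2); split.
  split.
    move=> k; case: (f k) => [[|N] i] /=; first by split; rewrite ?lexx ?ltW.
    have [[rad _] _] := PG N.
    have [h2] := rad i; rewrite /dl le_min => /andP[h1 _].
    split; first by apply: mulr_ge0 => //; apply: ltW.
    by rewrite mulrC -ler_pdivlMr.
  move=> y _ ny; case: (Hcov y ny) => [[N AN]|[j ->]].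
    have [[rad cov] _] := PG N.
    have [i hi] := cov y I (HA N y AN).
    have [k fk] := fsurj (N.+1, i); exists k; rewrite fk /=.
    have [AY dY] := PY (N, i) (ex_intro _ y (conj AN hi)).
    have [r0 rle] := rad i.
    apply: (HH N (c N i) (Y (N, i)) y (r N i)) => //.
    by move: rle; rewrite /dl le_min => /andP[].
  have [k fk] := fsurj (0%N, j); exists k; rewrite fk /= d2xx.
  by rewrite lexx.
rewrite fsum; apply: (le_trans _ (epsilon_trick0 _ (ltW ε0))).
apply: lee_nneseries => [n _ _|[|N] _].
  by apply: nneseries_ge0 => i _ _; exact: u0.
  rewrite /= (@eseries0 _ (fun _ => (0 `^ s)%:E)).
    by rewrite lee_fin divr_ge0 ?ltW.
  by move=> i _ _; rewrite powR0 ?gt_eqF.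
rewrite /=.
rewrite (eq_eseriesr (g := fun i => (C N `^ s)%:E * ((r N i) `^ s)%:E)); last first.
  move=> i _; have [[rad _] _] := PG N; have [ri _] := rad i.
  by rewrite -EFinM powRM // ltW.
rewrite nneseriesZl; last by move=> i _; rewrite lee_fin powR_ge0.
apply: (le_trans (lee_wpmul2l _ (PG N).2)); first by rewrite lee_fin powR_ge0.
rewrite -EFinM lee_fin /el mulrC divfK ?gt_eqF ?powR_gt0//.
Qed.

Section QM.
Context {X : Type} (d : X -> X -> \bar R) (qm : quasi_metric d).

Lemma qm_sym x y : d x y = d y x.
Proof. by case: qm => [[[]|[]]]. Qed.

Lemma qm_0 x y : d x y = 0 <-> x = y.
Proof. by case: qm => [[[_ []]|[_ []]]]. Qed.

Lemma qm_ge0 x y : 0 <= d x y.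
Proof. by case: qm => [[[_ [_ []]]|[_ [_ []]]]]. Qed.

Lemma qm_dd x : d x x = 0.
Proof. by apply/qm_0. Qed.

Lemma qm_inf_uniq : at_least_three_points X ->
  forall a b, is_infpt d a -> is_infpt d b -> a = b.
Proof.
move=> [x [y [z [xy [yz xz]]]]] a b ha hb.
case: qm => [[[_ [_ [_ fin]]]|[_ [_ [_ [inf [_ [_ uniq]]]]]]] _].
  exfalso; have [u ua] : exists u, u <> a.
    have [xa|xa] := pselect (x = a); last by exists x.
    by exists y => ya; apply: xy; rewrite ya.
  by have := fin u a; rewrite (ha u ua) ltxx.
by rewrite (uniq a ha) (uniq b hb).
Qed.

Lemma qm_fin x y : ~ is_infpt d x -> ~ is_infpt d y -> d x y < +oo.
Proof.
move=> hx hy.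
case: qm => [[[_ [_ [_ fin]]]|[_ [_ [_ [inf [infP [finP _]]]]]]] _]; first exact: fin.
apply: finP => [ei|ei]; [apply: hx|apply: hy]; rewrite ei; exact: infP.
Qed.

Lemma qm_finE x y : ~ is_infpt d x -> ~ is_infpt d y -> d x y = (fine (d x y))%:E.
Proof.
by move=> hx hy; rewrite fineK // ge0_fin_numE ?qm_ge0 ?qm_fin.
Qed.

Lemma qm_tri : exists K : R, (1 <= K)%R /\ forall c y z (r : R),
  d c y <= r%:E -> d c z <= r%:E -> d y z <= (K * r)%:E.
Proof.
case: qm => _ [K [K1 HK]]; exists K; split => // c y z r h1 h2.
apply: (le_trans (HK y z c)); rewrite EFinM; apply: lee_wpmul2l.
  by rewrite lee_fin (le_trans _ K1).
by rewrite ge_max qm_sym h1 h2.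
Qed.

End QM.

Lemma hmu_s0 {X : Type} (d : X -> X -> \bar R) : (exists x, ~ is_infpt d x) -> hmu d 0 setT <> 0.
Proof.
move=> [x nx] /hmu0P h.
have [c [r [[_ cov] le]]] := h 1%R (1/2)%R ltr01 (ltac:(by rewrite divr_gt0)).
have [i _] := cov x I nx.
have : ((r i) `^ 0)%:E <= (1/2)%:E.
  apply: le_trans le.
  apply: le_trans (nneseries_lim_ge i.+1 _); last by move=> n _ _; rewrite lee_fin powR_ge0.
  rewrite big_nat_recr //=; apply: leeDr.
  by apply: sume_ge0 => n _; rewrite lee_fin powR_ge0.
by rewrite powRr0 lee_fin ler_pdivlMr // mul1r; lra.
Qed.

Lemma dim_eq {X : Type} (d1 d2 : X -> X -> \bar R) :
  (exists x, ~ is_infpt d1 x) -> (exists x, ~ is_infpt d2 x) ->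
  (forall s, (0 < s)%R -> hmu d1 s setT = 0 -> hmu d2 s setT = 0) ->
  (forall s, (0 < s)%R -> hmu d2 s setT = 0 -> hmu d1 s setT = 0) ->
  hausdorff_dim d1 = hausdorff_dim d2.
Proof.
move=> n1 n2 h12 h21; rewrite /hausdorff_dim; congr ereal_inf; congr image.
apply/funext => s; apply/propext; split => -[s0 hs]; split => //.
- have [e0|sn0] := eqVneq s 0%R; first by move: hs; rewrite e0 => /(hmu_s0 n1).
  by apply: h12 => //; rewrite lt_neqAle eq_sym sn0.
- have [e0|sn0] := eqVneq s 0%R; first by move: hs; rewrite e0 => /(hmu_s0 n2).
  by apply: h21 => //; rewrite lt_neqAle eq_sym sn0.
Qed.

Lemma exists_noninf {X : Type} (d : X -> X -> \bar R) : quasi_metric d -> at_least_three_points X ->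
  exists x, ~ is_infpt d x.
Proof.
move=> qm three; have := three => -[x [y [z [xy _]]]].
have [hx|hx] := pselect (is_infpt d x); last by exists x.
have [hy|hy] := pselect (is_infpt d y); last by exists y.
by exfalso; apply: xy; apply: (qm_inf_uniq qm three).
Qed.

Lemma rescale_inf {X : Type} (d : X -> X -> \bar R) lam x : (0 < lam)%R ->
  is_infpt (rescale lam d) x <-> is_infpt d x.
Proof.
move=> l0; split => h y yx.
  have := h y yx; rewrite /rescale; case: (d y x) => //= t.
  by rewrite gt0_muleNy ?lte_fin in t.
by rewrite /rescale h // muleC gt0_mulye // lte_fin.
Qed.

Lemma lee_rescale (a : \bar R) (lam r : R) : (0 < lam)%R -> lam%:E * a <= r%:E -> a <= (r / lam)%:E.
Proof.
move=> l0; case: a => [t||] //=; last by move=> _; rewrite leNye.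
  by rewrite -EFinM !lee_fin ler_pdivlMr // mulrC.
by rewrite gt0_muley ?lte_fin // leye_eq.
Qed.

Lemma dim_rescale {X : Type} (d : X -> X -> \bar R) lam : at_least_three_points X -> quasi_metric d ->
  (0 < lam)%R -> hausdorff_dim d = hausdorff_dim (rescale lam d).
Proof.
move=> three qm l0.
have [x0 nx0] := exists_noninf qm three.
have [K [K1 HK]] := qm_tri qm.
have K0 : (0 < K)%R by apply: lt_le_trans K1.
apply: dim_eq.
- by exists x0.
- by exists x0; rewrite rescale_inf.
- move=> s s0; apply: (@transfer _ d (rescale lam d) s (fun _ => [set x | ~ is_infpt d x])
     (fun _ => lam * K)%R (fun _ => 1%R) (fun _ => x0)) => //.
  + by move=> x; rewrite /rescale qm_dd // mule0.
  + by move=> _; rewrite mulr_gt0.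
  + by move=> x nx; left; exists 0%N; rewrite /= -(rescale_inf _ _ l0).
  + move=> N c y z r _ _ r0 _ h1 h2; rewrite /rescale -mulrA EFinM.
    by apply: lee_wpmul2l; [rewrite lee_fin ltW|apply: HK h1 h2].
- move=> s s0; apply: (@transfer _ (rescale lam d) d s (fun _ => [set x | ~ is_infpt d x])
     (fun _ => K / lam)%R (fun _ => 1%R) (fun _ => x0)) => //.
  + exact: qm_dd.
  + by move=> _; rewrite divr_gt0.
  + by move=> x nx; left; exists 0%N.
  + by move=> N x /= nx; rewrite rescale_inf.
  + move=> N c y z r _ _ r0 _ h1 h2; rewrite mulrAC -mulrA.
    exact: (HK c y z _ (lee_rescale l0 h1) (lee_rescale l0 h2)).
Qed.

Section Inv.
Context {X : Type} (d : X -> X -> \bar R) (qm : quasi_metric d)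
  (three : at_least_three_points X) (o : X) (no : ~ is_infpt d o).

Let I := involution d o.
Let δ x y := fine (d x y).

Lemma dpos x y : ~ is_infpt d x -> ~ is_infpt d y -> x <> y -> (0 < δ x y)%R.
Proof.
move=> hx hy xy; have := qm_ge0 qm x y; rewrite (qm_finE qm hx hy) lee_fin /δ.
rewrite le_eqVlt => /orP[/eqP h|//]; exfalso; apply: xy; apply/(qm_0 qm).
by rewrite (qm_finE qm hx hy) -h.
Qed.

Lemma dsym x y : δ x y = δ y x.
Proof. by rewrite /δ qm_sym. Qed.

Lemma Kreal : exists K : R, (1 <= K)%R /\ forall a b c, ~ is_infpt d a -> ~ is_infpt d b ->
  ~ is_infpt d c -> (δ a b <= K * δ a c)%R \/ (δ a b <= K * δ c b)%R.
Proof.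
case: qm => _ [K [K1 HK]]; exists K; split => // a b c ha hb hc.
have := HK a b c; rewrite (qm_finE qm ha hb) (qm_finE qm ha hc) (qm_finE qm hc hb).
rewrite -EFin_max -EFinM lee_fin.
by case: (leP (δ a c) (δ c b)) => h; rewrite /δ ?max_r ?max_l ?(ltW h) //; [right|left].
Qed.

Lemma ediv_fin (a b : \bar R) : b <> 0 -> ediv a b = (fine a / fine b)%:E.
Proof. by move=> b0; rewrite /ediv ifN //; apply/eqP. Qed.

Lemma inv_xx x : I x x = 0.
Proof. by rewrite /I /involution asboolT. Qed.

Lemma inv_reg y z : ~ is_infpt d y -> ~ is_infpt d z -> y <> z -> y <> o -> z <> o ->
  I y z = (δ y z / (δ y o * δ o z))%:E.
Proof.
move=> hy hz yz yo zo; rewrite /I /involution !asboolF //.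
rewrite (qm_finE qm hy no) (qm_finE qm no hz) -EFinM ediv_fin //.
apply/eqP; rewrite eqe mulf_neq0 // gt_eqF // dpos //.
by move=> h; apply: zo.
Qed.

Lemma inv_o x : x <> o -> I o x = +oo.
Proof.
move=> xo; rewrite /I /involution asboolF; last by move=> h; apply: xo.
rewrite asboolF //; case: (pselect (is_infpt d x)) => hx.
  by rewrite asboolT // /ediv qm_dd // eqxx.
by rewrite asboolF // /ediv qm_dd // mul0e eqxx.
Qed.

Lemma inv_oC x : x <> o -> I x o = +oo.
Proof.
move=> xo; rewrite /I /involution asboolF //.
case: (pselect (is_infpt d x)) => hx.
  by rewrite asboolT // /ediv qm_dd // eqxx.
by rewrite asboolF // asboolF // /ediv qm_dd // mule0 eqxx.
Qed.

Lemma inv_infc c y : is_infpt d c -> y <> c -> y <> o -> ~ is_infpt d y ->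
  I c y = (1 / δ o y)%:E.
Proof.
move=> hc yc yo hy; rewrite /I /involution asboolF; last by move=> h; apply: yc.
rewrite asboolT // (qm_finE qm no hy) ediv_fin //.
by move=> [] /eqP; rewrite gt_eqF // dpos // => h; apply: yo.
Qed.

Lemma inv_inf x : is_infpt I x -> x = o.
Proof.
move=> hx; apply: contrapT => xo.
have [y [yx yo]] : exists y, y <> x /\ y <> o.
  have := three => -[a [b [c [ab [bc ac]]]]].
  have [ax|ax] := pselect (a = x); have [ao|ao] := pselect (a = o).
  - by exfalso; apply: xo; rewrite -ax.
  - have [bo|bo] := pselect (b = o).
      by exists c; split => [cx|co]; [apply: ac; rewrite ax|apply: bc; rewrite bo].
    by exists b; split => // bx; apply: ab; rewrite ax.
  - have [bx|bx] := pselect (b = x).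
      by exists c; split => [cx|co]; [apply: bc; rewrite bx|apply: ac; rewrite ao].
    by exists b; split => // bo; apply: ab; rewrite ao.
  - by exists a.
have := hx y yx; rewrite /I /involution asboolF //.
have [hy|hy] := pselect (is_infpt d y).
  rewrite asboolT //; have hxr : ~ is_infpt d x.
    by move=> h; apply: yx; apply: (qm_inf_uniq qm three).
  rewrite (qm_finE qm no hxr) ediv_fin //.
  by move=> [] /eqP; rewrite gt_eqF // dpos // => h; apply: xo.
rewrite asboolF //; have [hxi|hxi] := pselect (is_infpt d x).
  rewrite asboolT // (qm_finE qm hy no) ediv_fin //.
  by move=> [] /eqP; rewrite gt_eqF // dpos.
rewrite asboolF // (qm_finE qm hy no) (qm_finE qm no hxi) -EFinM ediv_fin //.
move=> [] /eqP; rewrite mulf_eq0 !gt_eqF ?dpos //.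
by move=> h; apply: xo.
Qed.

Lemma eqle (a b : R) : a = b -> (a <= b)%R.
Proof. by move=> ->. Qed.

Lemma inf_pick : exists i1, forall x, is_infpt d x -> x = i1.
Proof.
have [[a ha]|na] := pselect (exists a, is_infpt d a).
  by exists a => x hx; apply: (qm_inf_uniq qm three).
by exists o => x hx; exfalso; apply: na; exists x.
Qed.

Lemma nat_above (t : R) : exists N : nat, (t < N.+1%:R)%R.
Proof. by exists (Num.trunc t); apply: truncnS_gt. Qed.

Lemma inv_to : forall s, (0 < s)%R -> hmu d s setT = 0 -> hmu I s setT = 0.
Proof.
move=> s s0.
have [K [K1 HK]] := qm_tri qm.
have K0 : (0 < K)%R by apply: lt_le_trans K1.
have [i1 Hi1] := inf_pick.
apply: (@transfer _ d I s
  (fun N => [set x | ~ is_infpt d x /\ x <> o /\ (1 <= N.+1%:R * δ x o)%R])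
  (fun N => K * N.+1%:R ^+ 2)%R (fun _ => 1%R) (fun j => if j is 0%N then o else i1)) => //.
- exact: inv_xx.
- by move=> N; rewrite mulr_gt0 // exprn_gt0.
- move=> x nx; have [hx|hx] := pselect (is_infpt d x); first by right; exists 1%N; apply: Hi1.
  have [xo|xo] := pselect (x = o); first by right; exists 0%N.
  left; have [N hN] := nat_above (δ x o)^-1; exists N; split => //; split => //.
  have dp := dpos hx no xo.
  by rewrite -ler_pdivrMr // div1r ltW.
- by move=> N x [].
- move=> N c y z r [hy [yo Ny]] [hz [zo Nz]] r0 _ h1 h2.
  have [->|yz] := pselect (y = z); first by rewrite inv_xx lee_fin mulr_ge0 // mulr_ge0 // ltW.
  rewrite inv_reg // lee_fin.
  have := HK c y z r h1 h2; rewrite (qm_finE qm hy hz) lee_fin => hyz.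
  have dyo := dpos hy no yo; have doz : (0 < δ o z)%R by rewrite dsym dpos.
  rewrite ler_pdivrMr ?mulr_gt0 //.
  apply: (le_trans hyz).
  have h1' : (1 <= (N.+1%:R * δ y o) * (N.+1%:R * δ o z))%R.
    by have := ler_pM ler01 ler01 Ny Nz; rewrite mul1r [δ z o]dsym.
  have Kr0 : (0 <= K * r)%R by rewrite mulr_ge0 // ltW.
  apply: (le_trans (y := (K * r * ((N.+1%:R * δ y o) * (N.+1%:R * δ o z)))%R)).
    by rewrite -{1}(mulr1 (K * r)%R) ler_wpM2l.
  by apply: eqle; rewrite expr2; ring.
Qed.

Lemma inv_from : forall s, (0 < s)%R -> hmu I s setT = 0 -> hmu d s setT = 0.
Proof.
move=> s s0.
have [K [K1 HK]] := qm_tri qm.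
have [K' [K1' HK']] := Kreal.
pose KK := Num.max K K'.
have KK1 : (1 <= KK)%R by rewrite le_max K1.
have KK0 : (0 < KK)%R by apply: lt_le_trans KK1.
have HKK c y z r : d c y <= r%:E -> d c z <= r%:E -> d y z <= (KK * r)%:E.
  move=> h1 h2; apply: (le_trans (HK c y z r h1 h2)); rewrite lee_fin ler_wpM2r //.
    by rewrite -lee_fin (le_trans _ h1) // qm_ge0.
  by rewrite le_max lexx.
have HKK' a b c : ~ is_infpt d a -> ~ is_infpt d b -> ~ is_infpt d c ->
   (δ a b <= KK * δ a c)%R \/ (δ a b <= KK * δ c b)%R.
  move=> ha hb hc; have ge0 u v : (0 <= δ u v)%R by rewrite /δ fine_ge0 // qm_ge0.
  case: (HK' a b c ha hb hc) => h; [left|right]; apply: (le_trans h);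
  by rewrite ler_wpM2r // le_max lexx orbT.
pose rho N := (2 * KK * N.+1%:R)^-1%R.
have rho0 N : (0 < rho N)%R by rewrite invr_gt0 !mulr_gt0.
pose A N := [set x | ~ is_infpt d x /\ x <> o /\ (δ x o <= N.+1%:R)%R].
have bound N c y r : A N y -> (0 <= r)%R -> (r <= rho N)%R -> I c y <= r%:E ->
    d c y <= (KK * N.+1%:R ^+ 2 * r)%:E.
  move=> [hy [yo Ny]] r0 rle hI.
  have Nr : (r * (2 * KK * N.+1%:R) <= 1)%R.
    by rewrite -ler_pdivlMr ?mulr_gt0 // div1r.
  have doy : (0 < δ o y)%R by rewrite dsym dpos.
  have oy : o <> y by move=> h; apply: yo.
  have [cy|cy] := pselect (c = y); first by rewrite cy qm_dd // lee_fin !mulr_ge0 // ltW.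
  have [co|co] := pselect (c = o); first by move: hI; rewrite co inv_o.
  have [hc|hc] := pselect (is_infpt d c).
    have yc : y <> c by move=> h; apply: cy.
    move: hI; rewrite inv_infc // lee_fin => hI.
    exfalso; move: hI; rewrite ler_pdivrMr // => hI.
    have : (1 <= r * N.+1%:R)%R.
      by apply: (le_trans hI); rewrite ler_wpM2l // dsym.
    move=> h; have : (r * N.+1%:R * (2 * KK) <= 1)%R.
      by apply: le_trans Nr; apply: eqle; ring.
    have : (2 <= 2 * KK)%R by rewrite -{1}(mulr1 2%R) ler_wpM2l.
    move=> h3 h4; have h5 : (1 * 2 <= r * N.+1%:R * (2 * KK))%R.
      by apply: ler_pM => //; exact: ler0n.
    by move: (le_trans h5 h4); rewrite mul1r; lra.
  move: hI; rewrite inv_reg // lee_fin ler_pdivrMr ?mulr_gt0 ?dpos // => hI.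
  have dcy := dpos hc hy cy; have dco := dpos hc no co.
  rewrite (qm_finE qm hc hy) lee_fin.
  case: (HKK' c o y hc no hy) => hco.
    exfalso.
    have : (δ c y <= r * (KK * δ c y) * N.+1%:R)%R.
      apply: (le_trans hI); rewrite -mulrA ler_wpM2l //.
      apply: ler_pM => //; try exact: ltW.
      by rewrite dsym.
    have : (r * (KK * δ c y) * N.+1%:R = δ c y * (r * (2 * KK * N.+1%:R)) / 2)%R.
      by field.
    move=> -> h; have : (δ c y <= δ c y / 2)%R.
      apply: (le_trans h).
      by rewrite ler_pM2r ?invr_gt0 // -{2}(mulr1 (δ c y)) ler_pM2l.
    by move=> h'; lra.
  apply: (le_trans hI).
  have : (r * (δ c o * δ o y) <= r * ((KK * N.+1%:R) * N.+1%:R))%R.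
    apply: ler_wpM2l => //; apply: ler_pM; try exact: ltW.
      by apply: (le_trans hco); rewrite ler_wpM2l ?(ltW KK0).
    by rewrite dsym.
  move=> h; apply: (le_trans h).
  by apply: eqle; rewrite expr2; ring.
apply: (@transfer _ I d s A (fun N => KK * (KK * N.+1%:R ^+ 2))%R rho (fun _ => o)) => //.
- exact: qm_dd.
- by move=> N; rewrite !mulr_gt0 // exprn_gt0.
- move=> x nx; have [xo|xo] := pselect (x = o); first by right; exists 0%N.
  left; have [N hN] := nat_above (δ x o); exists N; split => //; split => //.
  exact: ltW.
- by move=> N x [_ [xo _]] /inv_inf.
- move=> N c y z r Ay Az r0 rle h1 h2.
  have := HKK c y z _ (bound N c y r Ay r0 rle h1) (bound N c z r Az r0 rle h2).
  by rewrite mulrA.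
Qed.

Lemma dim_inv : hausdorff_dim d = hausdorff_dim I.
Proof.
apply: dim_eq; first by exact: exists_noninf.
- have [y [yo _]] : exists y, y <> o /\ True.
    have := three => -[a [b [c [ab _]]]].
    have [ao|ao] := pselect (a = o); last by exists a.
    by exists b; split => // bo; apply: ab; rewrite ao bo.
  by exists y => /inv_inf.
- exact: inv_to.
- exact: inv_from.
Qed.

End Inv.

Lemma q4_inj {X : Type} (a b c e : X) : a <> b -> a <> c -> a <> e -> b <> c -> b <> e -> c <> e ->
  injective (q4 a b c e).
Proof.
move=> ab ac ae bc be ce [i hi] [j hj]; rewrite /q4 /= => h; apply: val_inj => /=.
move: hi hj h; case: i => [|[|[|[|i]]]]; case: j => [|[|[|[|j]]]] //=; congruence.
Qed.

Lemma adm_inj {X : Type} (P : 'I_4 -> X) : injective P -> admissible P.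
Proof. by move=> inj i j k ij _ _ [/inj h _]; move: ij; rewrite h eqxx. Qed.

Lemma crt_q4 {X : Type} (d : X -> X -> \bar R) a b c e :
  crt_d d (q4 a b c e) = (fd d a b * fd d c e, fd d a c * fd d e b, fd d a e * fd d b c)%R.
Proof. by rewrite /crt_d /q4 /= !inordK. Qed.

Lemma fd_reg {X : Type} (d : X -> X -> \bar R) x y : x <> y -> ~ is_infpt d x -> ~ is_infpt d y ->
  fd d x y = fine (d x y).
Proof. by move=> xy hx hy; rewrite /fd asboolF // => -[_ []]. Qed.

Lemma Phibar_pos (a b c : R) : (0 < a)%R -> (0 < b)%R -> (0 < c)%R ->
  Phibar a b c = ((ln (b / c))%:E, (ln (c / a))%:E, (ln (a / b))%:E).
Proof. by move=> a0 b0 c0; rewrite /Phibar !gt_eqF. Qed.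

Section Conf.
Context {X : Type} (M : mstruct R X) (d1 d2 : X -> X -> \bar R)
  (qm1 : quasi_metric d1) (qm2 : quasi_metric d2) (three : at_least_three_points X)
  (ind1 : induces d1 M) (ind2 : induces d2 M).

Let δ1 x y := fine (d1 x y).
Let δ2 x y := fine (d2 x y).
Let good x := ~ is_infpt d1 x /\ ~ is_infpt d2 x.

Lemma key y z p q : good y -> good z -> good p -> good q ->
  y <> z -> y <> p -> y <> q -> z <> p -> z <> q -> p <> q ->
  (δ2 y z * δ2 p q * (δ1 y q * δ1 z p) = δ1 y z * δ1 p q * (δ2 y q * δ2 z p))%R.
Proof.
move=> [y1 y2] [z1 z2] [p1 p2] [q1 q2] yz yp yq zp zq pq.
have adm := adm_inj (q4_inj yz yp yq zp zq pq).
have := etrans (esym (ind1 adm)) (ind2 adm).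
have sy u v : u <> v -> v <> u by move=> h h'; apply: h.
have zy : z <> y by move=> h'; apply: yz.
have py : p <> y by move=> h'; apply: yp.
have qy : q <> y by move=> h'; apply: yq.
have pz : p <> z by move=> h'; apply: zp.
have qz : q <> z by move=> h'; apply: zq.
have qp : q <> p by move=> h'; apply: pq.
have pos1 u v : good u -> good v -> u <> v -> (0 < δ1 u v)%R.
  by move=> [] ? ? [] ? ? uv; apply: dpos.
have pos2 u v : good u -> good v -> u <> v -> (0 < δ2 u v)%R.
  by move=> [] ? ? [] ? ? uv; apply: dpos.
rewrite !crt_q4 /= !fd_reg ?sy //.
rewrite !Phibar_pos ?mulr_gt0 ?pos1 ?pos2 ?sy //; try by split.
case=> _ h _.
have pp : (0 < δ1 y q * δ1 z p / (δ1 y z * δ1 p q))%R /\ (0 < δ2 y q * δ2 z p / (δ2 y z * δ2 p q))%R.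
  by rewrite !divr_gt0 ?mulr_gt0 ?pos1 ?pos2 ?sy //; split.
have := ln_inj (proj1 pp) (proj2 pp) h.
have nz1 : (δ1 y z * δ1 p q != 0)%R by rewrite gt_eqF // mulr_gt0 ?pos1 //; split.
have nz2 : (δ2 y z * δ2 p q != 0)%R by rewrite gt_eqF // mulr_gt0 ?pos2 //; split.
move=> /eqP; rewrite eqr_div // => /eqP h'.
transitivity (δ1 y q * δ1 z p * (δ2 y z * δ2 p q))%R; first by rewrite /δ1 /δ2; ring.
by rewrite h'; ring.
Qed.

Lemma conf_to s : (0 < s)%R -> hmu d1 s setT = 0 -> hmu d2 s setT = 0.
Proof.
move=> s0.
have [K [K1 HK]] := qm_tri qm1.
have K0 : (0 < K)%R by apply: lt_le_trans K1.
have [x0 _] := exists_noninf qm1 three.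
have [i1 Hi1] : exists i1, forall x, is_infpt d1 x -> x = i1.
  have [[a ha]|na] := pselect (exists a, is_infpt d1 a).
    by exists a => x hx; apply: (qm_inf_uniq qm1 three).
  by exists x0 => x hx; exfalso; apply: na; exists x.
have pos1 u v : good u -> good v -> u <> v -> (0 < δ1 u v)%R.
  by move=> [] ? ? [] ? ? uv; apply: dpos.
have pos2 u v : good u -> good v -> u <> v -> (0 < δ2 u v)%R.
  by move=> [] ? ? [] ? ? uv; apply: dpos.
have [[p [q [gp [gq pq]]]]|nopq] := pselect (exists p q, good p /\ good q /\ p <> q); last first.
  have [g Hg] : exists g, forall x, good x -> x = g.
    have [[a ga]|na] := pselect (exists a, good a).
      exists a => x gx; apply: contrapT => xa; apply: nopq; exists x, a; split => //.
    by exists x0 => x gx; exfalso; apply: na; exists x.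
  apply: (@transfer _ d1 d2 s (fun _ => set0) (fun _ => 1%R) (fun _ => 1%R)
    (fun j => if j is 0%N then g else i1)) => //.
  - exact: qm_dd.
  - move=> x nx; right; have [hx|hx] := pselect (is_infpt d1 x).
      by exists 1%N; apply: Hi1.
    by exists 0%N; apply: Hg.
have qp : q <> p by move=> h; apply: pq.
pose κ := (δ1 p q / δ2 p q)%R.
have κ0 : (0 < κ)%R by rewrite divr_gt0 ?pos1 ?pos2.
pose A N := [set x | good x /\ x <> p /\ x <> q /\
   (δ2 x q / δ1 x q <= N.+1%:R)%R /\ (δ2 x p / δ1 x p <= N.+1%:R)%R].
apply: (@transfer _ d1 d2 s A (fun N => K * N.+1%:R ^+ 2 * κ)%R (fun _ => 1%R)
    (fun j => match j with 0%N => p | 1%N => q | _ => i1 end)) => //.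
- exact: qm_dd.
- by move=> N; apply: mulr_gt0 => //; apply: mulr_gt0 => //; apply: exprn_gt0.
- move=> x nx; have [hx|hx] := pselect (is_infpt d1 x).
    by right; exists 2%N; apply: Hi1.
  have [xp|xp] := pselect (x = p); first by right; exists 0%N.
  have [xq|xq] := pselect (x = q); first by right; exists 1%N.
  left; have [N1 h1] := nat_above (δ2 x q / δ1 x q).
  have [N2 h2] := nat_above (δ2 x p / δ1 x p).
  exists (maxn N1 N2); split; first by split.
  do 2!split => //; split.
    by apply: (le_trans (ltW h1)); rewrite ler_nat ltnS leq_maxl.
  by apply: (le_trans (ltW h2)); rewrite ler_nat ltnS leq_maxr.
- by move=> N x [[]].
- move=> N c y z r [gy [yp [yq [Nyq Nyp]]]] [gz [zp [zq [Nzq Nzp]]]] r0 _ h1 h2.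
  have [yz|yz] := pselect (y = z).
    by rewrite yz qm_dd // lee_fin; apply: mulr_ge0 => //; apply: ltW; apply: mulr_gt0 => //; apply: mulr_gt0 => //; apply: exprn_gt0.
  have := HK c y z r h1 h2; rewrite (qm_finE qm1 gy.1 gz.1) lee_fin => hyz.
  rewrite (qm_finE qm2 gy.2 gz.2) lee_fin.
  have kk := key gy gz gp gq yz yp yq zp zq pq.
  have e : δ2 y z = (δ1 y z * (δ2 y q / δ1 y q) * (δ2 z p / δ1 z p) * κ)%R.
    have n1 : δ1 y q != 0%R by rewrite gt_eqF ?pos1.
    have n2 : δ1 z p != 0%R by rewrite gt_eqF ?pos1.
    have n3 : δ2 p q != 0%R by rewrite gt_eqF ?pos2.
    apply: (mulIf n3); apply: (mulIf (mulf_neq0 n1 n2)); rewrite /κ.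
    rewrite kk; field; rewrite n1 n2 n3 //.
  have ge1 u v : (0 <= δ1 u v)%R by rewrite /δ1 fine_ge0 // qm_ge0.
  have ge2 u v : (0 <= δ2 u v)%R by rewrite /δ2 fine_ge0 // qm_ge0.
  rewrite /δ2 in e; rewrite e.
  have r1 : (0 <= δ2 y q / δ1 y q)%R by rewrite divr_ge0.
  have r2 : (0 <= δ2 z p / δ1 z p)%R by rewrite divr_ge0.
  rewrite (_ : (K * N.+1%:R ^+ 2 * κ * r = (K * r) * N.+1%:R * N.+1%:R * κ)%R); last first.
    by rewrite expr2; ring.
  apply: ler_wpM2r; first exact: ltW.
  apply: ler_pM => //; first by rewrite mulr_ge0.
  by apply: ler_pM.
Qed.

End Conf.

Lemma dim_conf {X : Type} (M : mstruct R X) (d1 d2 : X -> X -> \bar R) :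
  quasi_metric d1 -> quasi_metric d2 -> at_least_three_points X ->
  induces d1 M -> induces d2 M -> hausdorff_dim d1 = hausdorff_dim d2.
Proof.
move=> q1 q2 three i1 i2; apply: dim_eq.
- exact: exists_noninf.
- exact: exists_noninf.
- by move=> s s0; apply: (conf_to q1 q2 three i1 i2).
- by move=> s s0; apply: (conf_to q2 q1 three i2 i1).
Qed.

Section Transport.
Context {X X' : Type} (f : X -> X') (fb : bijective f) (d' : X' -> X' -> \bar R).

Let dd := fun x y => d' (f x) (f y).

Lemma inf_tr x : is_infpt dd x <-> is_infpt d' (f x).
Proof.
have [g fg gf] := fb.
split => h y yx.
  by rewrite -(gf y); apply: h => e; apply: yx; rewrite -e gf.
by apply: h => e; apply: yx; rewrite -(fg y) e fg.
Qed.

Lemma qm_tr : quasi_metric d' -> quasi_metric dd.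
Proof.
have [g fg gf] := fb.
have finj := can_inj fg.
move=> [hs [K [K1 HK]]]; split; last by exists K; split => // x y z; apply: HK.
case: hs => [[sy [z0 [ge fin]]]|[sy [z0 [ge [inf [infP [finP uniq]]]]]]].
  left; split; first by move=> x y; apply: sy.
  split; first by move=> x y; rewrite /dd z0; split => [/finj|->].
  by split => x y; [apply: ge|apply: fin].
right; split; first by move=> x y; apply: sy.
split; first by move=> x y; rewrite /dd z0; split => [/finj|->].
split; first by move=> x y; apply: ge.
have ne x : x <> g inf -> f x <> inf by move=> xi e; apply: xi; rewrite -e fg.
exists (g inf); split; first by move=> x xi; rewrite /dd gf; apply: infP; apply: ne.
split; first by move=> x y xi yi; apply: finP; apply: ne.
move=> p hp; have : is_infpt d' (f p) by apply/inf_tr.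
by move=> /uniq <-; rewrite fg.
Qed.

Lemma ind_tr (M : mstruct R X) (M' : mstruct R X') :
  mobius_equivalence M M' f -> induces d' M' -> induces dd M.
Proof.
move=> [_ me] ind P adm.
have finj := bij_inj fb.
have adm' : admissible (f \o P).
  by move=> i j k ij jk ik [/finj e1 /finj e2]; apply: (adm i j k ij jk ik).
rewrite -(me P adm) (ind _ adm').
have fdE a b : fd d' (f a) (f b) = fd dd a b.
  rewrite /fd; have -> // : (f a <> f b /\ (is_infpt d' (f a) \/ is_infpt d' (f b))) =
     (a <> b /\ (is_infpt dd a \/ is_infpt dd b)).
  apply/propext; rewrite !inf_tr; split => -[h1 h2]; split => //.
    by move=> e; apply: h1; rewrite e.
  by move=> /finj.
by rewrite /crt_d /= !fdE.
Qed.

Lemma cover_tr δ c r : delta_cover dd setT δ c r <-> delta_cover d' setT δ (f \o c) r.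
Proof.
have [g fg gf] := fb.
split => -[rad cov]; split => // y _ ny.
  have : ~ is_infpt dd (g y) by rewrite inf_tr gf.
  by move=> /(cov _ I) [i hi]; exists i; rewrite /= -(gf y).
have : ~ is_infpt d' (f y) by rewrite -inf_tr.
by move=> /(cov _ I) [i hi]; exists i.
Qed.

Lemma dim_tr : hausdorff_dim dd = hausdorff_dim d'.
Proof.
have [g fg gf] := fb.
have hd s δ : hmu_delta dd s δ setT = hmu_delta d' s δ setT.
  rewrite /hmu_delta; congr ereal_inf; apply/seteqP; split => e [c [r [cov ->]]].
    by exists (f \o c), r; split => //; apply/cover_tr.
  exists (g \o c), r; split => //; apply/cover_tr.
  by rewrite (_ : f \o (g \o c) = c) //; apply/funext => i /=; rewrite gf.
have hh s : hmu dd s setT = hmu d' s setT.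
  rewrite /hmu; congr ereal_sup; apply/seteqP; split => e [δ δ0 <-]; exists δ => //.
rewrite /hausdorff_dim; congr ereal_inf; congr image; apply/funext => s.
by rewrite /= hh.
Qed.

End Transport.

End S.

Theorem theorem1p1 (R : realType) (X X' : Type) :
  (forall (M : mstruct R X) (d : X -> X -> \bar R),
     intrinsic_mobius_space M -> quasi_metric d -> induces d M ->
     (forall lam : R, 0 < lam -> hausdorff_dim d = hausdorff_dim (rescale lam d)) /\
     (forall o : X, ~ is_infpt d o -> hausdorff_dim d = hausdorff_dim (involution d o)))
  /\
  (forall (M : mstruct R X) (d1 d2 : X -> X -> \bar R),
     intrinsic_mobius_space M -> quasi_metric d1 -> quasi_metric d2 ->
     induces d1 M -> induces d2 M -> hausdorff_dim d1 = hausdorff_dim d2)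
  /\
  (forall (M : mstruct R X) (M' : mstruct R X') (f : X -> X')
          (d : X -> X -> \bar R) (d' : X' -> X' -> \bar R),
     intrinsic_mobius_space M -> intrinsic_mobius_space M' ->
     mobius_equivalence M M' f ->
     quasi_metric d -> induces d M -> quasi_metric d' -> induces d' M' ->
     hausdorff_dim d = hausdorff_dim d').
Proof.
split; [|split].
- move=> M d [three _] qm ind; split.
    by move=> lam l0; apply: dim_rescale.
  by move=> o no; apply: dim_inv.
- by move=> M d1 d2 [three _] q1 q2 i1 i2; apply: dim_conf i1 i2.
- move=> M M' f d d' [three _] _ me qm ind qm' ind'.
  have fb := me.1.
  rewrite -(dim_tr fb d'); apply: (dim_conf qm _ three ind).
    exact: qm_tr.
  exact: ind_tr me ind'.
Qed.
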